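(* Let $\Sigma$ be a Markov shift with countable alphabet $I$, let $G$ be a countable group and $\Psi:I^*\to G$ a semigroup homomorphism, and let $\varphi:\Sigma\to\mathbb{R}$ be of medium variation and asymptotically $\alpha$-symmetric with respect to $\Psi$ for some $\alpha\ge1$. Then there exist Hölder continuous functions $\varphi_j:\Sigma\to\mathbb{R}$ and real numbers $D_j\ge1$, $j\in\mathbb{N}$, such that each $\varphi_j$ is asymptotically $\alpha D_j^{1/(2j)}$-symmetric with respect to $\Psi$, $\lim_j D_j^{1/(2j)}=1$, and $\varphi_j\to\varphi$ uniformly on compact subsets of $\Sigma$.
   Context: Markov shift: for a countable alphabet $I\subset\mathbb{N}$ and $A\in\{0,1\}^{I\times I}$, $\Sigma=\{\omega\in I^{\mathbb{N}}: a(\omega_i,\omega_{i+1})=1\ \forall i\}$ with product-of-discrete topology and left shift $\sigma$; $\Sigma^n$ admissible words of length $n$, $\Sigma^*=\bigcup_n\Sigma^n$, $|\omega|$ word length, $[\omega]$ cylinder. $\Psi(\omega)=\Psi(\omega_1)\cdots\Psi(\omega_n)$ for words. $S_n\varphi=\sum_{i<n}\varphi\circ\sigma^i$. Hölder continuous: for some $\beta>0$, $\sup\{|\varphi(\omega)-\varphi(\tau)|e^{\beta|\omega\wedge\tau|}:|\omega\wedge\tau|\ge1\}<\infty$, $|\omega\wedge\tau|$ the length of the longest common initial block. Medium variation: $\varphi$ is continuous and there is $(D_n)$ with $D_n^{1/n}\to1$ such that $e^{S_n\varphi(x)-S_n\varphi(y)}\le D_n$ for all $n$, $\omega\in\Sigma^n$,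 $x,y\in[\omega]$. Asymptotically $\alpha$-symmetric w.r.t. $\Psi$ ($\alpha\ge1$): there exist $n_0$, $(c_n)\subset\mathbb{R}^+$ with $c_n^{1/(2n)}\to\alpha$, $(N_n)\subset\mathbb{N}$ with $N_n/n\to0$, such that for all $g\in G$, $n\ge n_0$: $\sum_{\omega\in\Sigma^n:\Psi(\omega)=g}e^{\sup S_n\varphi|_{[\omega]}}\le c_n\sum_{\omega\in\Sigma^*:\Psi(\omega)=g^{-1},\ n-N_n\le|\omega|\le n+N_n}e^{\sup S_{|\omega|}\varphi|_{[\omega]}}$. *)

(* Defs.v *)
From HB Require Import structures.
From mathcomp Require Import all_boot all_order all_algebra.
From mathcomp Require Import all_classical all_reals all_analysis.
Set Implicit Arguments. Unset Strict Implicit. Unset Printing Implicit Defensive.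
Import Order.TTheory GRing.Theory Num.Theory.
Import numFieldNormedType.Exports.
Local Open Scope classical_set_scope.
Local Open Scope ring_scope.

(* Points of the full shift space: sequences nat -> nat (0-indexed, so
   x 0 is the first letter omega_1), with the product of discrete topologies
   (pointwise convergence topology, nat being discrete). *)
Notation Seq := {ptws nat -> nat}.

Definition Sigma (I : set nat) (A : nat -> nat -> bool) : set Seq :=
  [set x : Seq | forall i : nat, I (x i) /\ A (x i) (x i.+1)].

Definition shift (x : Seq) : Seq := fun i => x i.+1.

Definition Birk {R : realType} (phi : Seq -> R) (n : nat) (x : Seq) : R :=
  \sum_(i < n) phi (iter i shift x).

Definition admissible (I : set nat) (A : nat -> nat -> bool) (w : seq nat) : Prop :=
  (forall i, (i < size w)%N -> I (nth 0%N w i)) /\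
  (forall i, (i.+1 < size w)%N -> A (nth 0%N w i) (nth 0%N w i.+1)).

Definition cylinder (I : set nat) (A : nat -> nat -> bool) (w : seq nat) : set Seq :=
  [set x | Sigma I A x /\ forall i, (i < size w)%N -> x i = nth 0%N w i].

Definition supS {R : realType} (I : set nat) (A : nat -> nat -> bool)
  (phi : Seq -> R) (n : nat) (w : seq nat) : \bar R :=
  ereal_sup [set (Birk phi n x)%:E | x in cylinder I A w].

Definition is_group (G : Type) (mul : G -> G -> G) (one : G) (inv : G -> G) : Prop :=
  [/\ forall a b c, mul a (mul b c) = mul (mul a b) c,
      forall a, mul one a = a,
      forall a, mul a one = a,
      forall a, mul (inv a) a = one
    & forall a, mul a (inv a) = one].

(* The semigroup homomorphism Psi : I^* -> G determined by its values on
   letters: Psi(w_1...w_n) = Psi(w_1) ... Psi(w_n). *)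
Definition Psi_word (G : Type) (mul : G -> G -> G) (one : G) (psi : nat -> G)
  (w : seq nat) : G := foldr (fun a g => mul (psi a) g) one w.

Definition holder {R : realType} (I : set nat) (A : nat -> nat -> bool)
  (phi : Seq -> R) : Prop :=
  exists beta : R, 0 < beta /\ exists M : R,
    forall (n : nat) (x y : Seq), (1 <= n)%N -> Sigma I A x -> Sigma I A y ->
      (forall i, (i < n)%N -> x i = y i) ->
      `|phi x - phi y| * expR (beta * n%:R) <= M.

Definition medium_variation {R : realType} (I : set nat) (A : nat -> nat -> bool)
  (phi : Seq -> R) : Prop :=
  {within Sigma I A, continuous phi} /\
  exists D : nat -> R,
    (fun n : nat => D n `^ (n%:R^-1)) @ \oo --> (1 : R) /\
    forall (n : nat) (w : seq nat) (x y : Seq),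
      admissible I A w -> size w = n -> cylinder I A w x -> cylinder I A w y ->
      expR (Birk phi n x - Birk phi n y) <= D n.

Definition asym_symmetric {R : realType} (I : set nat) (A : nat -> nat -> bool)
  (G : Type) (mul : G -> G -> G) (one : G) (inv : G -> G) (psi : nat -> G)
  (phi : Seq -> R) (alpha : R) : Prop :=
  exists n0 : nat, exists c : nat -> R,
    (forall n, 0 < c n) /\
    (fun n : nat => c n `^ ((2 * n)%:R^-1)) @ \oo --> alpha /\
    exists N : nat -> nat,
      (fun n : nat => (N n)%:R / n%:R : R) @ \oo --> (0 : R) /\
      forall (g : G) (n : nat), (n0 <= n)%N ->
        (\esum_(w in [set w : seq nat | admissible I A w /\ size w = n /\
                                       Psi_word mul one psi w = g])
            expeR (supS I A phi n w)
         <= (c n)%:E *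
            \esum_(w in [set w : seq nat | admissible I A w /\ (1 <= size w)%N /\
                           Psi_word mul one psi w = inv g /\
                           (n - N n <= size w)%N /\ (size w <= n + N n)%N])
               expeR (supS I A phi (size w) w))%E.

(* Main.v *)
Require Import Defs.
From mathcomp Require Import all_boot all_order all_algebra.
From mathcomp Require Import all_classical all_reals all_analysis.
From Stdlib Require Import ClassicalEpsilon.
From mathcomp Require Import zify ring lra.
Import Order.TTheory GRing.Theory Num.Theory.
Import numFieldNormedType.Exports.
Local Open Scope classical_set_scope.
Local Open Scope ring_scope.
Set Implicit Arguments. Unset Strict Implicit. Unset Printing Implicit Defensive.



Definition tau (I : set nat) (A : nat -> nat -> bool) (a : nat) : Seq :=
  epsilon (inhabits (fun _ : nat => 0%N))
    (fun x : Seq => Sigma I A x /\ x 0%N = a).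

Definition pk (I : set nat) (A : nat -> nat -> bool) (k : nat) (z : Seq) : Seq :=
  fun i => if (i < k)%N then z i else tau I A (z k.-1) (i - k.-1)%N.

Lemma tauP I A (x : Seq) : Sigma I A x -> Sigma I A (tau I A (x 0%N)) /\ tau I A (x 0%N) 0%N = x 0%N.
Proof.
move=> Sx; rewrite /tau; apply: (epsilon_spec (inhabits (fun _ : nat => 0%N))
  (fun y : Seq => Sigma I A y /\ y 0%N = x 0%N)).
by exists x.
Qed.

Lemma iter_shiftE (x : Seq) (i j : nat) : iter i Defs.shift x j = x (addn i j).
Proof. by elim: i j => [|i IH] j //=; rewrite /Defs.shift IH addSnnS. Qed.

Lemma Sigma_iter I A (x : Seq) i : Sigma I A x -> Sigma I A (iter i Defs.shift x).
Proof. by move=> Sx j; rewrite !iter_shiftE addnS; exact: Sx. Qed.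

Lemma pk_agree I A k (z : Seq) i : (i < k)%N -> pk I A k z i = z i.
Proof. by rewrite /pk => ->. Qed.

Lemma pk_Sigma I A k (z : Seq) : (1 <= k)%N -> Sigma I A z -> Sigma I A (pk I A k z).
Proof.
move=> k1 Sz.
have Sw : Sigma I A (iter k.-1 Defs.shift z) by exact: Sigma_iter.
have [St St0] := tauP Sw.
rewrite iter_shiftE addn0 in St St0.
move=> i; rewrite /pk.
case: (ltngtP i.+1 k) => hi.
- exact: Sz.
- have -> : (i.+1 - k.-1 = (i - k.-1).+1)%N.
    by rewrite subSn //; lia.
  exact: St.
- move: St St0; rewrite -hi /= subSnn => St St0.
  split; first by case: (Sz i).
  by rewrite -{1}St0; case: (St 0%N).
Qed.

Lemma pk_shift I A k (z : Seq) : (1 <= k)%N ->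
  Defs.shift (pk I A k.+1 z) = pk I A k (Defs.shift z).
Proof.
move=> k1; apply: functional_extensionality_dep => i.
rewrite /Defs.shift /pk /= ltnS prednK //; case: ifP => // h.
congr (tau _ _ _ _); lia.
Qed.

Lemma pk_iter I A N t (z : Seq) : (t < N)%N ->
  iter t Defs.shift (pk I A N z) = pk I A (N - t) (iter t Defs.shift z).
Proof.
elim: t => [|t IH] ht /=; first by rewrite subn0.
rewrite IH ?(ltnW ht) //.
have -> : (N - t = (N - t.+1).+1)%N by lia.
rewrite pk_shift //; lia.
Qed.

Lemma pk_dep I A k (x y : Seq) : (1 <= k)%N -> (forall i, (i < k)%N -> x i = y i) ->
  pk I A k x = pk I A k y.
Proof.
move=> k1 h; apply: functional_extensionality_dep => i; rewrite /pk.
case: ifP => hi; first exact: h.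
rewrite h //; lia.
Qed.


Definition mvcond {R : realType} (I : set nat) (A : nat -> nat -> bool)
  (phi : Seq -> R) (D : nat -> R) :=
  forall (n : nat) (w : seq nat) (x y : Seq),
      admissible I A w -> size w = n -> cylinder I A w x -> cylinder I A w y ->
      expR (Birk phi n x - Birk phi n y) <= D n.

Lemma mv_bound {R : realType} I A (phi : Seq -> R) D n (x y : Seq) :
  mvcond I A phi D -> Sigma I A x -> Sigma I A y -> (forall i, (i < n)%N -> x i = y i) ->
  `|Birk phi n x - Birk phi n y| <= Num.max 0 (ln (D n)).
Proof.
move=> hD Sx Sy hxy.
pose w := mkseq x n.
have adm : admissible I A w.
  split=> i hi; rewrite /w size_mkseq in hi.
    by rewrite nth_mkseq //; case: (Sx i).
  by rewrite !nth_mkseq // ?(ltnW hi) //; case: (Sx i).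
have cx : cylinder I A w x by split => // i; rewrite size_mkseq => hi; rewrite nth_mkseq.
have cy : cylinder I A w y.
  by split => // i; rewrite size_mkseq => hi; rewrite nth_mkseq // hxy.
have sw : size w = n by rewrite size_mkseq.
have h1 := hD n w x y adm sw cx cy.
have h2 := hD n w y x adm sw cy cx.
have lem : forall e : R, expR e <= D n -> e <= Num.max 0 (ln (D n)).
  move=> e he; have Dpos : 0 < D n by apply: lt_le_trans he; exact: expR_gt0.
  rewrite le_max; apply/orP; right.
  by rewrite -(expRK e) ler_ln // ?posrE ?expR_gt0.
rewrite ler_norml; apply/andP; split.
  by rewrite lerNl opprB; exact: lem.
exact: lem.
Qed.

Lemma shift_sum {R : realType} (g : nat -> R) (n t : nat) :
  \sum_(k < n) g (k + t)%N - \sum_(k < n) g k =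
  \sum_(k < t) g (k + n)%N - \sum_(k < t) g k.
Proof.
have E : forall a b, \sum_(k < a + b) g k = \sum_(k < a) g k + \sum_(k < b) g (k + a)%N.
  move=> a b; rewrite -!(big_mkord xpredT) (big_cat_nat _ (leq_addr b a)) //=.
  by rewrite (big_addn 0 (a + b) a) addKn; congr (_ + _); rewrite big_mkord.
have h1 := E n t.
have h2 : \sum_(k < n + t) g k = \sum_(k < t) g k + \sum_(k < n) g (k + t)%N.
  by rewrite addnC; exact: E.
have := etrans (esym h1) h2; lra.
Qed.

Lemma Birk1 {R : realType} (phi : Seq -> R) x : Birk phi 1 x = phi x.
Proof. by rewrite /Birk big_ord1. Qed.

Definition phiN {R : realType} I A (phi : Seq -> R) (N : nat) (z : Seq) : R :=
  (N%:R)^-1 * \sum_(t < N) phi (pk I A (N - t) z).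

Lemma main_est {R : realType} I A (phi : Seq -> R) D (N n : nat) (x : Seq) :
  mvcond I A phi D -> (1 <= N)%N -> Sigma I A x ->
  `|Birk phi n x - Birk (phiN I A phi N) n x| <=
     n%:R * Num.max 0 (ln (D N)) / N%:R + 2 * N%:R * Num.max 0 (ln (D 1%N)).
Proof.
move=> hD N1 Sx.
set LN := Num.max 0 (ln (D N)); set V := Num.max 0 (ln (D 1%N)).
have V0 : 0 <= V by rewrite le_max lexx.
have LN0 : 0 <= LN by rewrite le_max lexx.
have HN : 0 < N%:R :> R by rewrite ltr0n.
pose f (t i : nat) := phi (iter i Defs.shift x) - phi (pk I A (N - t) (iter i Defs.shift x)).
have Ff : forall t i, (t < N)%N -> `|f t i| <= V.
  move=> t i ht.
  have := @mv_bound R I A phi D 1 (iter i Defs.shift x) (pk I A (N - t) (iter i Defs.shift x))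
    hD (Sigma_iter i Sx) (@pk_Sigma I A (N - t) _ _ (Sigma_iter i Sx)).
  rewrite !Birk1; apply.
  - lia.
  - move=> j; rewrite ltnS leqn0 => /eqP ->; rewrite pk_agree //; lia.
have F2 : N%:R * (Birk phi n x - Birk (phiN I A phi N) n x) =
          \sum_(i < n) \sum_(t < N) f t i.
  rewrite /Birk /phiN mulrBr !mulr_sumr -sumrB; apply: eq_bigr => i _.
  rewrite /f sumrB sumr_const card_ord mulrA mulfV ?mul1r ?mulr_natl //.
  by rewrite lt0r_neq0.
have F3 : forall k, Birk phi N (iter k Defs.shift x) - Birk phi N (pk I A N (iter k Defs.shift x))
          = \sum_(t < N) f t (t + k)%N.
  move=> k; rewrite /Birk -sumrB; apply: eq_bigr => t _.
  by rewrite /f pk_iter // -iterD.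
have F4 : forall k, `|\sum_(t < N) f t (t + k)%N| <= LN.
  move=> k; rewrite -F3; apply: mv_bound hD _ _ _.
  - exact: Sigma_iter.
  - by apply: pk_Sigma => //; exact: Sigma_iter.
  - by move=> i hi; rewrite pk_agree.
have B : forall t (h : nat -> nat), (t < N)%N -> `|\sum_(k < t) f t (h k)| <= N%:R * V.
  move=> t h ht; apply: le_trans (ler_norm_sum _ _ _) _.
  apply: (@le_trans _ _ (\sum_(k < t) V)).
    by apply: ler_sum => k _; exact: Ff.
  rewrite sumr_const card_ord -[V *+ t]mulr_natl; apply: ler_wpM2r => //; rewrite ler_nat; exact: ltnW.
have F6 : forall t, (t < N)%N ->
    `|\sum_(k < n) f t (k + t)%N - \sum_(k < n) f t k| <= 2 * N%:R * V.
  move=> t ht; rewrite (shift_sum (f t)).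
  apply: le_trans (ler_normB _ _) _.
  have := B t (fun k => k + n)%N ht; have := B t id ht; rewrite /id /=.
  move=> b1 b2; lra.
have e1 : \sum_(k < n) \sum_(t < N) f t (t + k)%N = \sum_(t < N) \sum_(k < n) f t (k + t)%N.
  rewrite exchange_big; apply: eq_bigr => t _; apply: eq_bigr => k _; by rewrite addnC.
have e2 : \sum_(i < n) \sum_(t < N) f t i = \sum_(t < N) \sum_(i < n) f t i.
  exact: exchange_big.
have K : N%:R * (Birk phi n x - Birk (phiN I A phi N) n x) =
   \sum_(k < n) \sum_(t < N) f t (t + k)%N -
   \sum_(t < N) (\sum_(k < n) f t (k + t)%N - \sum_(k < n) f t k).
  rewrite F2 e1 e2 sumrB; lra.
have K1 : `|\sum_(k < n) \sum_(t < N) f t (t + k)%N| <= n%:R * LN.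
  apply: le_trans (ler_norm_sum _ _ _) _.
  apply: (@le_trans _ _ (\sum_(k < n) LN)); first by apply: ler_sum => k _; exact: F4.
  by rewrite sumr_const card_ord mulr_natl.
have K2 : `|\sum_(t < N) (\sum_(k < n) f t (k + t)%N - \sum_(k < n) f t k)| <= N%:R * (2 * N%:R * V).
  apply: le_trans (ler_norm_sum _ _ _) _.
  apply: (@le_trans _ _ (\sum_(t < N) (2 * N%:R * V))).
    by apply: ler_sum => t _; exact: F6.
  by rewrite sumr_const card_ord -[_ *+ N]mulr_natl.
have K3 : N%:R * `|Birk phi n x - Birk (phiN I A phi N) n x| <= n%:R * LN + N%:R * (2 * N%:R * V).
  rewrite -[N%:R in X in X <= _]ger0_norm ?(ltW HN) // -normrM K.
  by apply: le_trans (ler_normB _ _) _; exact: lerD.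
rewrite -(ler_pM2l HN); apply: le_trans K3 _.
rewrite le_eqVlt; apply/orP; left; apply/eqP; field.
by rewrite lt0r_neq0.
Qed.

Lemma phiN_diff {R : realType} I A (phi : Seq -> R) D (N : nat) (x y : Seq) :
  mvcond I A phi D -> (1 <= N)%N -> Sigma I A x -> Sigma I A y -> x 0%N = y 0%N ->
  `|phiN I A phi N x - phiN I A phi N y| <= Num.max 0 (ln (D 1%N)).
Proof.
move=> hD N1 Sx Sy e0.
set V := Num.max 0 (ln (D 1%N)).
have HN : 0 < N%:R :> R by rewrite ltr0n.
rewrite /phiN -mulrBr -sumrB normrM ger0_norm ?invr_ge0 ?(ltW HN) //.
rewrite -(ler_pM2l HN) mulrA mulfV ?lt0r_neq0 // mul1r.
apply: le_trans (ler_norm_sum _ _ _) _.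
apply: (@le_trans _ _ (\sum_(t < N) V)).
  apply: ler_sum => t _; have ht := ltn_ord t.
  have := @mv_bound R I A phi D 1 (pk I A (N - t) x) (pk I A (N - t) y) hD
    (@pk_Sigma I A (N - t) _ _ Sx) (@pk_Sigma I A (N - t) _ _ Sy).
  rewrite !Birk1; apply.
  - lia.
  - lia.
  - move=> j; rewrite ltnS leqn0 => /eqP ->; rewrite !pk_agree //; lia.
by rewrite sumr_const card_ord -[_ *+ N]mulr_natl.
Qed.

Lemma phiN_holder {R : realType} I A (phi : Seq -> R) D (N : nat) :
  mvcond I A phi D -> (1 <= N)%N -> holder I A (phiN I A phi N).
Proof.
move=> hD N1; exists 1; split; first exact: ltr01.
exists (Num.max 0 (ln (D 1%N)) * expR N%:R) => n x y n1 Sx Sy hxy.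
have V0 : 0 <= Num.max 0 (ln (D 1%N)) :> R by rewrite le_max lexx.
case: (leqP n N) => hn.
  apply: ler_pM.
  - exact: normr_ge0.
  - exact: ltW (expR_gt0 _).
  - by apply: phiN_diff => //; apply: hxy.
  - by rewrite mul1r ler_expR ler_nat.
have -> : phiN I A phi N x = phiN I A phi N y.
  rewrite /phiN; congr (_ * _); apply: eq_bigr => t _.
  have ht := ltn_ord t; rewrite (@pk_dep I A (N - t) x y) //; first lia.
  move=> i hi; apply: hxy; lia.
rewrite subrr normr0 mul0r; apply: mulr_ge0 => //; exact: ltW (expR_gt0 _).
Qed.

Lemma inv_cvg0 {R : realType} : (fun n : nat => (n%:R : R)^-1) @ \oo --> (0 : R).
Proof.
rewrite -cvg_shiftS; apply: cvg_trans cvg_harmonic.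
by apply: near_eq_cvg; near=> n.
Unshelve. all: by end_near. Qed.

Lemma lim_aux {R : realType} (a b : R) (N : nat -> nat) :
  (fun n : nat => (N n)%:R / n%:R : R) @ \oo --> (0 : R) ->
  (fun n : nat => expR (((n%:R * a + b) + ((n + N n)%N%:R * a + b)) * ((2 * n)%:R^-1)))
    @ \oo --> expR a.
Proof.
move=> hN.
pose g := fun n : nat => ((n%:R * a + b) + ((n + N n)%N%:R * a + b)) * ((2 * n)%:R^-1).
suff hg : g @ \oo --> a.
  exact: (@continuous_cvg _ _ _ _ _ g expR a (@continuous_expR R a) hg).
have h : (fun n : nat => a + (N n)%:R / n%:R * (a / 2) + b * (n%:R)^-1) @ \oo --> a.
  rewrite -[X in _ --> X]addr0 -[X in _ --> X]addr0.
  apply: cvgD; [apply: cvgD; [exact: cvg_cst|] |].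
    rewrite -(mul0r (a / 2)); exact: cvgMr_tmp.
  rewrite -(mulr0 b); apply: cvgMl_tmp; exact: inv_cvg0.
apply: cvg_trans h; apply: near_eq_cvg; near=> n => /=.
have n0 : (n%:R : R) != 0 by rewrite pnatr_eq0 -lt0n; near: n; exists 1%N.
rewrite /g natrM natrD; field.
by rewrite n0.
Unshelve. all: by end_near. Qed.

Lemma supS_le {R : realType} I A (f g : Seq -> R) n w (d : R) :
  (forall x, Sigma I A x -> Birk f n x <= Birk g n x + d) ->
  (expeR (supS I A f n w) <= (expR d)%:E * expeR (supS I A g n w))%E.
Proof.
move=> h.
have : (supS I A f n w <= supS I A g n w + d%:E)%E.
  apply: ge_ereal_sup => _ [x cx <-].
  apply: (@le_trans _ _ ((Birk g n x)%:E + d%:E)%E).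
    by rewrite -EFinD lee_fin; apply: h; case: cx.
  by apply: leeD2r; apply: ereal_sup_ubound; exists x.
rewrite -lee_expeR => /le_trans; apply.
by rewrite expeRD muleC.
Qed.

Lemma esum_scale {R : realType} (S : set (seq nat)) (k : R) (a : seq nat -> \bar R) :
  0 <= k -> (forall x, (0 <= a x)%E) ->
  (\esum_(x in S) (k%:E * a x) <= k%:E * \esum_(x in S) a x)%E.
Proof.
move=> k0 a0; apply: ge_ereal_sup => _ [X XS <-].
rewrite -ge0_mule_fsumr //; apply: lee_wpmul2l; first by rewrite lee_fin.
by apply: ereal_sup_ubound; exists X.
Qed.

Lemma asym_transfer {R : realType} I A (G : Type) (mul : G -> G -> G) one inv psi
  (phi1 phi2 : Seq -> R) (alpha a b : R) :
  0 <= a -> 0 <= b ->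
  (forall m x, Sigma I A x -> `|Birk phi1 m x - Birk phi2 m x| <= m%:R * a + b) ->
  asym_symmetric I A mul one inv psi phi1 alpha ->
  asym_symmetric I A mul one inv psi phi2 (alpha * expR a).
Proof.
move=> a0 b0 hd [n0 [c [cpos [hc [N [hN hineq]]]]]].
pose d (m : nat) := m%:R * a + b.
have h12 : forall m x, Sigma I A x -> Birk phi2 m x <= Birk phi1 m x + d m.
  by move=> m x Sx; have := hd m x Sx; rewrite ler_norml => /andP[h1 h2]; rewrite /d; lra.
have h21 : forall m x, Sigma I A x -> Birk phi1 m x <= Birk phi2 m x + d m.
  by move=> m x Sx; have := hd m x Sx; rewrite ler_norml => /andP[h1 h2]; rewrite /d; lra.
exists n0, (fun n => c n * expR (d n + d (n + N n)%N)).
split; first by move=> n; rewrite mulr_gt0 // expR_gt0.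
split.
  have -> : (fun n : nat => (c n * expR (d n + d (n + N n)%N)) `^ ((2 * n)%:R^-1)) =
     (fun n : nat => c n `^ ((2 * n)%:R^-1) *
        expR (((n%:R * a + b) + ((n + N n)%N%:R * a + b)) * ((2 * n)%:R^-1))).
    apply: funext => n; rewrite powRM ?(ltW (cpos n)) ?(ltW (expR_gt0 _)) //.
    by rewrite -expRM.
  by apply: (cvgM hc (lim_aux b hN)); apply: filter_on_Filter.
exists N; split => // g n hn.
have H1 := hineq g n hn.
set L1 := esum _ (fun w => expeR (supS I A phi1 n w)) in H1.
set R1 := esum _ (fun w => expeR (supS I A phi1 (size w) w)) in H1.
set R2 := esum _ (fun w => expeR (supS I A phi2 (size w) w)).
have HL : (\esum_(w in [set w : seq nat | admissible I A w /\ size w = n /\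
                                       Psi_word mul one psi w = g])
            expeR (supS I A phi2 n w) <= (expR (d n))%:E * L1)%E.
  apply: le_trans (esum_scale _ _ _) => //; last by move=> ?; exact: expeR_ge0.
    by apply: le_esum => w _; apply: supS_le => x Sx; exact: h12.
have HR : (R1 <= (expR (d (n + N n)%N))%:E * R2)%E.
  apply: le_trans (esum_scale _ _ _); last by move=> ?; exact: expeR_ge0.
    apply: le_esum => w [_ [_ [_ [_ hw]]]].
    apply: le_trans (@supS_le R I A phi1 phi2 (size w) w (d (size w)) _) _.
      by move=> x Sx; exact: h21.
    apply: lee_wpmul2r; first exact: expeR_ge0.
    rewrite lee_fin ler_expR /d lerD2r; apply: ler_wpM2r => //.
    by rewrite ler_nat.
  exact: ltW (expR_gt0 _).
apply: le_trans HL _.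
apply: (@le_trans _ _ ((expR (d n))%:E * ((c n)%:E * ((expR (d (n + N n)%N))%:E * R2)))%E).
  apply: lee_wpmul2l; first by rewrite lee_fin ltW // expR_gt0.
  apply: le_trans H1 _; apply: lee_wpmul2l => //; rewrite lee_fin ltW //.
have -> : expR (d n + d (n + N n)%N) = expR (d n) * expR (d (n + N n)%N) by exact: expRD.
rewrite !EFinM le_eqVlt; apply/orP; left; apply/eqP.
by rewrite muleCA !muleA.
Qed.



Lemma max0E {R : realType} (y : R) : Num.max 0 y = (y + `|y|) / 2.
Proof.
case: (lerP 0 y) => hy.
  by rewrite ger0_norm //; field.
by rewrite ltr0_norm //; field.
Qed.

Lemma D_lim {R : realType} (D : nat -> R) :
  (fun n : nat => D n `^ (n%:R^-1)) @ \oo --> (1 : R) ->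
  (fun j : nat => (expR (2 * Num.max 0 (ln (D j.+1)))) `^ ((2 * j.+1)%:R^-1)) @ \oo --> (1 : R).
Proof.
move=> hu.
have hl : (fun n : nat => ln (D n `^ (n%:R^-1))) @ \oo --> (0 : R).
  rewrite -ln1.
  exact: (@continuous_cvg _ _ _ _ _ (fun n : nat => D n `^ (n%:R^-1)) (@ln R) 1 (continuous_ln ltr01) hu).
have hl1 : (fun j : nat => ln (D j.+1 `^ ((j.+1)%:R^-1))) @ \oo --> (0 : R).
  by move: hl; rewrite -cvg_shiftS.
have hm : (fun j : nat => Num.max 0 (ln (D j.+1 `^ ((j.+1)%:R^-1)))) @ \oo --> (0 : R).
  under eq_cvg do rewrite max0E.
  suff : (fun j : nat => (ln (D j.+1 `^ ((j.+1)%:R^-1)) + `|ln (D j.+1 `^ ((j.+1)%:R^-1))|) / 2)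
      @ \oo --> ((0 : R) + `|0 : R|) / 2 by rewrite normr0 addr0 mul0r.
  apply: cvgMr_tmp; apply: cvgD; [exact: hl1 | exact: (cvg_norm hl1)].
have -> : (fun j : nat => (expR (2 * Num.max 0 (ln (D j.+1)))) `^ ((2 * j.+1)%:R^-1)) =
          (fun j : nat => expR (Num.max 0 (ln (D j.+1 `^ ((j.+1)%:R^-1))))).
  apply: funext => j; rewrite -expRM ln_powR; congr expR.
  have k0 : 0 < (j.+1)%:R :> R by rewrite ltr0n.
  case: (lerP 0 (ln (D j.+1))) => hy.
    rewrite !max_r //; last by apply: mulr_ge0 => //; rewrite invr_ge0 ltW.
    rewrite natrM; field; by rewrite lt0r_neq0.
  rewrite !max_l ?ltW //; first by rewrite mulr0 mul0r.
  by rewrite pmulr_rlt0 // invr_gt0.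
have H := (@continuous_cvg _ _ _ _ _ _ (@expR R) 0 (@continuous_expR R 0) hm).
rewrite expR0 in H; exact: H.
Qed.


Definition cyl (x : Seq) (k : nat) : set Seq := [set y : Seq | forall i, (i < k)%N -> y i = x i].

Lemma cyl_nbhs (x : Seq) k : nbhs x (cyl x k).
Proof.
elim: k => [|k IH].
  by apply: filterS (@filterT _ (nbhs x) _); move=> y _ i.
have -> : cyl x k.+1 = cyl x k `&` (fun y : Seq => y k = x k).
  apply/seteqP; split => y.
    by move=> h; split => [i hi|]; apply: h => //; lia.
  move=> [h1 h2] i; rewrite ltnS leq_eqVlt => /orP [/eqP -> //|]; exact: h1.
apply: filterI => //.
have hp := @proj_continuous nat (fun _ : nat => nat) k x.
have H : nbhs (proj k x) [set x k] by apply/principal_filterP.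
have := hp _ H.
by [].
Qed.

Lemma nbhs_cyl (x : Seq) (U : set Seq) : nbhs x U -> exists k, cyl x k `<=` U.
Proof.
move=> hU; apply: contrapT => hn.
have hk : forall k, exists y : Seq, cyl x k y /\ ~ U y.
  move=> k; apply: contrapT => hy; apply: hn; exists k => y cy.
  apply: contrapT => nUy; apply: hy; by exists y.
pose y (k : nat) : Seq := projT1 (cid (hk k)).
have cv : y @ \oo --> (x : Seq).
  apply/pointwise_cvgP => t.
  apply: cvg_near_cst; exists t.+1 => // k /= hkt.
  have [cyk _] := projT2 (cid (hk k)); exact: cyk.
have := cv U hU; case => K _ hK.
have := hK K (leqnn K).
by have [_ nU] := projT2 (cid (hk K)).
Qed.

Lemma cont_cyl {R : realType} I A (phi : Seq -> R) (x : Seq) (e : R) :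
  {within Sigma I A, continuous phi} -> Sigma I A x -> 0 < e ->
  exists k, forall y, cyl x k y -> Sigma I A y -> `|phi x - phi y| < e.
Proof.
move=> hc Sx e0.
have := (@subspace_continuousP _ (Sigma I A) _ phi).1 hc x Sx.
move=> /(_ _ (nbhsx_ballx (phi x) e e0)) hw.
have [k hk] := nbhs_cyl hw.
exists k => y cy Sy; have := hk y cy Sy.
by rewrite -ball_normE.
Qed.

Lemma count_bound {R : realType} (F : nat -> R) (N k : nat) (a V : R) :
  0 <= a -> 0 <= V ->
  (forall t, (t < N)%N -> F t <= V) ->
  (forall t, (t + k < N)%N -> F t <= a) ->
  \sum_(t < N) F t <= N%:R * a + k%:R * V.
Proof.
move=> a0 V0 hV ha.
case: (leqP k N) => hk.
  rewrite -(big_mkord xpredT) (big_cat_nat _ (leq_subr k N)) //=.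
  apply: lerD.
    apply: (@le_trans _ _ (\sum_(0 <= t < N - k) a)).
      rewrite big_nat_cond [X in _ <= X]big_nat_cond; apply: ler_sum => t /andP[/andP[_ ht] _].
      apply: ha; lia.
    rewrite sumr_const_nat subn0 -[a *+ _]mulr_natl; apply: ler_wpM2r => //; rewrite ler_nat; lia.
  apply: (@le_trans _ _ (\sum_(N - k <= t < N) V)).
    rewrite big_nat_cond [X in _ <= X]big_nat_cond; apply: ler_sum => t /andP[/andP[_ ht] _].
    exact: hV.
  rewrite sumr_const_nat -[V *+ _]mulr_natl; apply: ler_wpM2r => //; rewrite ler_nat; lia.
apply: (@le_trans _ _ (\sum_(t < N) V)).
  by apply: ler_sum => t _; apply: hV.
rewrite sumr_const card_ord -[V *+ _]mulr_natl.
have : N%:R * V <= k%:R * V by apply: ler_wpM2r => //; rewrite ler_nat; lia.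
have : 0 <= N%:R * a by apply: mulr_ge0.
lra.
Qed.

Lemma unif_conv {R : realType} I A (phi : Seq -> R) D (K : set Seq) :
  mvcond I A phi D -> {within Sigma I A, continuous phi} -> K `<=` Sigma I A -> compact K ->
  {uniform K, (fun j => phiN I A phi j.+1) @ \oo --> phi}.
Proof.
move=> hD hc KS cK.
move=> P /uniform_nbhs [E [entE sub]].
move: entE; rewrite -entourage_ballE => -[e /= e0 sbe].
set V := Num.max 0 (ln (D 1%N)).
have V0 : 0 <= V by rewrite le_max lexx.
suff : \forall j \near \oo, forall y, K y -> `|phi y - phiN I A phi j.+1 y| < e.
  apply: filterS => j hj; apply: sub => y Ky; apply: sbe; rewrite /= -ball_normE; exact: hj.
have cover : forall x, K x -> \forall x' \near x & i \near \oo,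
    (fun j y => Sigma I A y -> `|phi y - phiN I A phi j.+1 y| < e) i x'.
  move=> x Kx; have Sx := KS x Kx.
  have e4 : 0 < e / 4 by rewrite divr_gt0.
  have [k hk] := cont_cyl hc Sx e4.
  have q0 : 0 <= 2 * k%:R * V / e.
    by apply: divr_ge0; [apply: mulr_ge0 => //; apply: mulr_ge0 | exact: ltW].
  exists (cyl x k, [set j | ((Num.truncn (2 * k%:R * V / e)).+1 <= j)%N]).
    by split => //=; [exact: cyl_nbhs | exists (Num.truncn (2 * k%:R * V / e)).+1].
  move=> [y j] /= [cy hj] Sy.
  set N := j.+1.
  have HN : 0 < N%:R :> R by rewrite ltr0n.
  have hNq : 2 * k%:R * V / e < N%:R.
    rewrite -truncn_lt_nat //; rewrite /N; lia.
  have eq : phi y - phiN I A phi N y =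
      N%:R^-1 * \sum_(t < N) (phi y - phi (pk I A (N - t) y)).
    rewrite /phiN sumrB sumr_const card_ord mulrBr; congr (_ - _).
    by rewrite -[phi y *+ N]mulr_natl mulrA mulVf ?lt0r_neq0 // mul1r.
  rewrite eq normrM ger0_norm ?invr_ge0 ?(ltW HN) //.
  apply: (@le_lt_trans _ _ (N%:R^-1 * (N%:R * (e / 2) + k%:R * V))).
    apply: ler_wpM2l; first by rewrite invr_ge0 ltW.
    apply: le_trans (ler_norm_sum _ _ _) _.
    apply: (count_bound (F := fun t => `|phi y - phi (pk I A (N - t) y)|)).
    - by rewrite divr_ge0 ?ltW.
    - exact: V0.
    - move=> t ht /=.
      have := @mv_bound R I A phi D 1 y (pk I A (N - t) y) hD Sy
        (@pk_Sigma I A (N - t) _ _ Sy).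
      rewrite !Birk1; apply.
      + lia.
      + move=> i; rewrite ltnS leqn0 => /eqP ->; rewrite pk_agree //; lia.
    - move=> t ht /=.
      have c2 : cyl x k (pk I A (N - t) y).
        by move=> i hi; rewrite pk_agree; [exact: cy | lia].
      have h1 := hk y cy Sy.
      have hNt : (0 < N - t)%N by lia.
      have h2 := hk _ c2 (@pk_Sigma I A (N - t) y hNt Sy).
      have : `|phi y - phi (pk I A (N - t) y)| <=
             `|phi x - phi y| + `|phi x - phi (pk I A (N - t) y)|.
        have -> : phi y - phi (pk I A (N - t) y) =
          - (phi x - phi y) + (phi x - phi (pk I A (N - t) y)) by ring.
        by apply: le_trans (ler_normD _ _) _; rewrite normrN.
      have : e / 4 + e / 4 = e / 2 by field.
      lra.
  have -> : N%:R^-1 * (N%:R * (e / 2) + k%:R * V) = e / 2 + k%:R * V / N%:R.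
    by field; rewrite lt0r_neq0.
  have : k%:R * V / N%:R < e / 2.
    have h3 : 2 * k%:R * V < N%:R * e by rewrite -ltr_pdivrMr.
    rewrite ltr_pdivrMr //.
    have -> : e / 2 * N%:R = (N%:R * e) / 2 by field.
    lra.
  lra.
have H := (compact_near_coveringP K).1 cK nat \oo
  (fun j y => Sigma I A y -> `|phi y - phiN I A phi j.+1 y| < e) eventually_filter cover.
by apply: filterS H => j hj y Ky; exact: hj y Ky (KS y Ky).
Qed.

Unset Implicit Arguments.

Theorem lemma3p3 (R : realType) (I : set nat) (A : nat -> nat -> bool)
  (G : countType) (mul : G -> G -> G) (one : G) (inv : G -> G)
  (psi : nat -> G) (phi : Seq -> R) (alpha : R) :
  is_group mul one inv ->
  1 <= alpha ->
  medium_variation I A phi ->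
  asym_symmetric I A mul one inv psi phi alpha ->
  exists (phis : nat -> Seq -> R) (D : nat -> R),
    (forall j, holder I A (phis j)) /\
    (forall j, 1 <= D j) /\
    (forall j, asym_symmetric I A mul one inv psi (phis j)
                 (alpha * D j `^ ((2 * j.+1)%:R^-1))) /\
    (fun j : nat => D j `^ ((2 * j.+1)%:R^-1)) @ \oo --> (1 : R) /\
    (forall K : set Seq, K `<=` Sigma I A -> compact K ->
       {uniform K, phis @ \oo --> phi}).
Proof.
move=> hG halpha [hc [D [hDlim hD]]] hasym.
exists (fun j => phiN I A phi j.+1), (fun j => expR (2 * Num.max 0 (ln (D j.+1)))).
have L0 : forall k, 0 <= Num.max 0 (ln (D k)) by move=> k; rewrite le_max lexx.
split; [|split; [|split; [|split]]].
- move=> j; exact: (@phiN_holder R I A phi D j.+1 hD).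
- move=> j; rewrite -expR0 ler_expR; apply: mulr_ge0 => //.
- move=> j.
  have HN : 0 < (j.+1)%:R :> R by rewrite ltr0n.
  have -> : expR (2 * Num.max 0 (ln (D j.+1))) `^ ((2 * j.+1)%:R^-1) =
            expR (Num.max 0 (ln (D j.+1)) / (j.+1)%:R).
    rewrite -expRM; congr expR; rewrite natrM; field; by rewrite lt0r_neq0.
  apply: (@asym_transfer R I A G mul one inv psi phi (phiN I A phi j.+1) alpha
            (Num.max 0 (ln (D j.+1)) / (j.+1)%:R) (2 * (j.+1)%:R * Num.max 0 (ln (D 1%N)))).
  + by apply: divr_ge0 => //; exact: ltW.
  + by apply: mulr_ge0 => //; apply: mulr_ge0.
  + move=> m x Sx; have := @main_est R I A phi D j.+1 m x hD (ltn0Sn j) Sx.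
    by rewrite mulrA.
  + exact: hasym.
- exact: (D_lim hDlim).
- move=> K KS cK; exact: (unif_conv hD hc KS cK).
Qed.
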